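(* Under the hypotheses and notation below, the two transformed potentials $$u^{[N]}_0=u+\mathrm{i}\left(\varphi^{(2)\dagger}\mathbf{M}^{-1}\varphi^{(1)}\right)_x$$ and $$u^{[N]}_\infty=\frac{1+2\varphi^{(1)\dagger}\mathbf{\Lambda}^\dagger\mathbf{M}^{-1}\varphi^{(1)}}{1-2\varphi^{(2)\dagger}\mathbf{\Lambda}^\dagger(\mathbf{M}^\dagger)^{-1}\varphi^{(2)}}\,u+\frac{4\varphi^{(2)\dagger}(\mathbf{\Lambda}^{\dagger})^2\mathbf{M}^{-1}\varphi^{(1)}}{1-2\varphi^{(2)\dagger}\mathbf{\Lambda}^\dagger(\mathbf{M}^\dagger)^{-1}\varphi^{(2)}}$$ coincide: $u^{[N]}_0=u^{[N]}_\infty$.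
   Context: Let $u\in L^{\infty}\cap C^{\infty}$ be a solution of the DNLS equation $\mathrm{i}u_t+u_{xx}+2\mathrm{i}(|u|^2u)_x=0$. $^*$ denotes complex conjugation, $^\dagger$ conjugate transpose, $\sigma_3=\mathrm{diag}(1,-1)$, $\mathbf{Q}=\begin{pmatrix}0&\mathrm{i}u\\ \mathrm{i}u^*&0\end{pmatrix}$, $\mathbf{U}(\mathbf{Q};\lambda)=-2\mathrm{i}\sigma_3\lambda^2+2\mathbf{Q}\lambda$, $\mathbf{V}(\mathbf{Q};\lambda)=(4\lambda^2+2\mathbf{Q}^2)\mathbf{U}(\mathbf{Q};\lambda)+2\mathrm{i}\sigma_3\mathbf{Q}_x\lambda$. Let $N\ge1$, $\lambda_1,\dots,\lambda_N\in\mathbb{C}$ with $\lambda_j^*\neq\pm\lambda_i$ for all $i,j$, and let $\varphi_i=(\varphi_i^{(1)},\varphi_i^{(2)})^T$ solve $\varphi_x=\mathbf{U}(\mathbf{Q};\lambda_i)\varphi$, $\varphi_t=\mathbf{V}(\mathbf{Q};\lambda_i)\varphi$. Put $\varphi^{(k)}=(\varphi_1^{(k)},\dots,\varphi_N^{(k)})^T$, $\mathbf{\Lambda}=\mathrm{diag}(\lambda_i)$, and $\mathbf{M}_{ij}=\left(\frac{\varphi_j^{\dagger}\varphi_i}{\lambda_j^{*}-\lambda_i}-\frac{\varphi_j^{\dagger}\sigma_3\varphi_i}{\lambda_j^{*}+\lambda_i}\right)\lambda_i\lambda_j^{*}$. Assume $\mathbf{M}$ is invertible and $1-2\varphi^{(2)\dagger}\mathbf{\Lambda}^\dagger(\mathbf{M}^\dagger)^{-1}\varphi^{(2)}\ne0$.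 *)

(* Defs.v *)
From HB Require Import structures.
From mathcomp Require Import all_boot all_order all_algebra.
From mathcomp Require Import all_classical all_reals all_analysis.
From mathcomp Require Import complex.
Set Implicit Arguments. Unset Strict Implicit. Unset Printing Implicit Defensive.
Import Order.TTheory GRing.Theory Num.Theory.
Import numFieldNormedType.Exports.
Local Open Scope ring_scope.
Local Open Scope complex_scope.

Section DNLS.
Variable R : realType.
Notation C := (R[i]).

Definition pdx (f : R -> R -> C) : R -> R -> C := fun x t =>
  (derive1 (fun y => complex.Re (f y t)) x)%:C
  + 'i%C * (derive1 (fun y => complex.Im (f y t)) x)%:C.
Definition pdt (f : R -> R -> C) : R -> R -> C := fun x t =>
  (derive1 (fun s => complex.Re (f x s)) t)%:C
  + 'i%C * (derive1 (fun s => complex.Im (f x s)) t)%:C.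

Definition pderivable (f : R -> R -> C) : Prop :=
  forall x t,
    derivable (fun y => complex.Re (f y t)) x 1 /\
    derivable (fun y => complex.Im (f y t)) x 1 /\
    derivable (fun s => complex.Re (f x s)) t 1 /\
    derivable (fun s => complex.Im (f x s)) t 1.

Definition jcontinuous (f : R -> R -> C) : Prop :=
  continuous (fun p : R * R => complex.Re (f p.1 p.2)) /\
  continuous (fun p : R * R => complex.Im (f p.1 p.2)).

Fixpoint iter_pd (w : seq bool) (f : R -> R -> C) : R -> R -> C :=
  match w with
  | [::] => f
  | b :: w' => (if b then pdx else pdt) (iter_pd w' f)
  end.

Definition smooth2 (f : R -> R -> C) : Prop :=
  forall w, pderivable (iter_pd w f) /\ jcontinuous (iter_pd w f).

Definition bounded2 (f : R -> R -> C) : Prop :=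
  exists B : R, forall x t, `|f x t| <= B%:C.

Definition is_DNLS_solution (u : R -> R -> C) : Prop :=
  forall x t, 'i%C * pdt u x t + pdx (pdx u) x t
     + 2%:R * 'i%C * pdx (fun y s => `|u y s| ^+ 2 * u y s) x t = 0.

Definition conjmx m n (A : 'M[C]_(m, n)) : 'M[C]_(n, m) := (map_mx conjc A)^T.

Definition sigma3 : 'M[C]_2 := \matrix_(i, j) (if i == j then
   (if i == 0 then 1 else -1) else 0).

Definition Qmat (u : R -> R -> C) (x t : R) : 'M[C]_2 :=
  \matrix_(i, j) (if (i == 0) && (j == 1) then 'i%C * u x t
                  else if (i == 1) && (j == 0) then 'i%C * conjc (u x t)
                  else 0).

Definition Umat (Q : 'M[C]_2) (l : C) : 'M[C]_2 :=
  (- 2%:R * 'i%C * l ^+ 2) *: sigma3 + (2%:R * l) *: Q.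

Definition Vmat (Q Qx : 'M[C]_2) (l : C) : 'M[C]_2 :=
  ((4%:R * l ^+ 2)%:M + 2%:R *: (Q *m Q)) *m Umat Q l
  + (2%:R * 'i%C * l) *: (sigma3 *m Qx).

Definition Qxmat (u : R -> R -> C) (x t : R) : 'M[C]_2 :=
  \matrix_(i, j) pdx (fun y s => Qmat u y s i j) x t.

Definition lax_solution (u : R -> R -> C) (l : C)
    (phi : R -> R -> 'cV[C]_2) : Prop :=
  pderivable (fun x t => phi x t 0 0) /\ pderivable (fun x t => phi x t 1 0) /\
  forall x t (k : 'I_2),
    pdx (fun y s => phi y s k 0) x t = (Umat (Qmat u x t) l *m phi x t) k 0 /\
    pdt (fun y s => phi y s k 0) x t
      = (Vmat (Qmat u x t) (Qxmat u x t) l *m phi x t) k 0.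

(* phi^(k) = (phi_1^(k), ..., phi_N^(k))^T *)
Definition phicomp N (phi : 'I_N -> R -> R -> 'cV[C]_2) (k : 'I_2) x t
  : 'cV[C]_N := \col_i phi i x t k 0.

Definition Lam N (lam : 'I_N -> C) : 'M[C]_N := \matrix_(i, j) (if i == j then lam i else 0).

Definition Mmat N (lam : 'I_N -> C) (phi : 'I_N -> R -> R -> 'cV[C]_2) x t
  : 'M[C]_N := \matrix_(i, j)
   (((conjmx (phi j x t) *m phi i x t) 0 0 / (conjc (lam j) - lam i)
    - (conjmx (phi j x t) *m sigma3 *m phi i x t) 0 0 / (conjc (lam j) + lam i))
    * lam i * conjc (lam j)).

Definition denom N lam phi x t : C :=
  1 - 2%:R * (conjmx (phicomp phi 1 x t) *m conjmx (Lam lam)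
               *m invmx (conjmx (@Mmat N lam phi x t)) *m phicomp phi 1 x t) 0 0.

Definition u0 N (u : R -> R -> C) lam phi : R -> R -> C := fun x t =>
  u x t + 'i%C * pdx (fun y s => (conjmx (phicomp phi 1 y s)
       *m invmx (@Mmat N lam phi y s) *m phicomp phi 0 y s) 0 0) x t.

Definition uinf N (u : R -> R -> C) lam phi : R -> R -> C := fun x t =>
  (1 + 2%:R * (conjmx (phicomp phi 0 x t) *m conjmx (Lam lam)
        *m invmx (@Mmat N lam phi x t) *m phicomp phi 0 x t) 0 0)
    / denom lam phi x t * u x t
  + 4%:R * (conjmx (phicomp phi 1 x t) *m (conjmx (Lam lam) ^+ 2)
        *m invmx (@Mmat N lam phi x t) *m phicomp phi 0 x t) 0 0
    / denom lam phi x t.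

End DNLS.

(* Main.v *)
Require Import Defs.
From HB Require Import structures.
From mathcomp Require Import all_boot all_order all_algebra.
From mathcomp Require Import all_classical all_reals all_analysis.
From mathcomp Require Import complex.
From mathcomp Require Import ring.
Import Order.TTheory GRing.Theory Num.Theory.
Local Open Scope ring_scope.
Local Open Scope complex_scope.

Set Implicit Arguments. Unset Strict Implicit.

Section H.
Variable R : realType.
Local Notation C := (R[i]).

Lemma ReD (a b : C) : complex.Re (a + b) = complex.Re a + complex.Re b.
Proof. by case: a; case: b. Qed.
Lemma ImD (a b : C) : complex.Im (a + b) = complex.Im a + complex.Im b.
Proof. by case: a; case: b. Qed.
Lemma ReM (a b : C) : complex.Re (a * b) = complex.Re a * complex.Re b - complex.Im a * complex.Im b.
Proof. by case: a; case: b. Qed.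
Lemma ImM (a b : C) : complex.Im (a * b) = complex.Re a * complex.Im b + complex.Im a * complex.Re b.
Proof. by case: a => ? ?; case: b => ? ? /=; ring. Qed.
Lemma ReJ (a : C) : complex.Re (a^*) = complex.Re a. Proof. by case: a. Qed.
Lemma ImJ (a : C) : complex.Im (a^*) = - complex.Im a. Proof. by case: a. Qed.
Lemma ReR (r : R) : complex.Re (r%:C) = r. Proof. by []. Qed.
Lemma ImR (r : R) : complex.Im (r%:C) = 0. Proof. by []. Qed.
Lemma C_ext (a b : C) : complex.Re a = complex.Re b -> complex.Im a = complex.Im b -> a = b.
Proof. by case: a; case: b => ? ? ? ? /= -> ->. Qed.

Definition hasd (f : R -> C) (x : R) (d : C) :=
  [/\ derivable (fun y => complex.Re (f y)) x 1, derivable (fun y => complex.Im (f y)) x 1,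
      derive1 (fun y => complex.Re (f y)) x = complex.Re d &
      derive1 (fun y => complex.Im (f y)) x = complex.Im d].

Lemma rD (F G : R -> R) x : derivable F x 1 -> derivable G x 1 ->
  derivable (fun y => F y + G y) x 1 /\ derive1 (fun y => F y + G y) x = derive1 F x + derive1 G x.
Proof.
move=> dF dG; split; first exact: (derivableD dF dG).
by rewrite !derive1E -deriveD.
Qed.
Lemma rN (F : R -> R) x : derivable F x 1 ->
  derivable (fun y => - F y) x 1 /\ derive1 (fun y => - F y) x = - derive1 F x.
Proof.
move=> dF; split; first exact: (derivableN dF).
by rewrite !derive1E -deriveN.
Qed.
Lemma rM (F G : R -> R) x : derivable F x 1 -> derivable G x 1 ->
  derivable (fun y => F y * G y) x 1 /\
  derive1 (fun y => F y * G y) x = derive1 F x * G x + F x * derive1 G x.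
Proof.
move=> dF dG; split; first exact: (derivableM dF dG).
rewrite !derive1E.
have -> : (fun y => F y * G y) = F * G by [].
by rewrite deriveM // /GRing.scale /= addrC mulrC.
Qed.
Lemma rV (F : R -> R) x : F x != 0 -> derivable F x 1 ->
  derivable (fun y => (F y)^-1) x 1.
Proof. by move=> nz dF; apply: derivableV. Qed.
Lemma rC (k : R) x : derivable (fun _ : R => k) x 1 /\ derive1 (fun _ : R => k) x = 0.
Proof. split; first exact: derivable_cst. by rewrite derive1E derive_cst. Qed.

Lemma hasd_add f g x d1 d2 : hasd f x d1 -> hasd g x d2 ->
  hasd (fun y => f y + g y) x (d1 + d2).
Proof.
case=> a1 b1 c1 e1 [a2 b2 c2 e2].
have eR : (fun y => complex.Re (f y + g y)) = (fun y => complex.Re (f y) + complex.Re (g y)).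
  by apply: funext => y; rewrite ReD.
have eI : (fun y => complex.Im (f y + g y)) = (fun y => complex.Im (f y) + complex.Im (g y)).
  by apply: funext => y; rewrite ImD.
have [p1 q1] := rD a1 a2; have [p2 q2] := rD b1 b2.
by split; rewrite ?eR ?eI // ?q1 ?q2 ?ReD ?ImD ?c1 ?c2 ?e1 ?e2.
Qed.

Lemma hasd_opp f x d : hasd f x d -> hasd (fun y => - f y) x (- d).
Proof.
case=> a1 b1 c1 e1.
have eR : (fun y => complex.Re (- f y)) = (fun y => - complex.Re (f y)).
  by apply: funext => y; case: (f y).
have eI : (fun y => complex.Im (- f y)) = (fun y => - complex.Im (f y)).
  by apply: funext => y; case: (f y).
have [p1 q1] := rN a1; have [p2 q2] := rN b1.
by split; rewrite ?eR ?eI // ?q1 ?q2 ?c1 ?e1; case: (d).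
Qed.

Lemma hasd_mul f g x d1 d2 : hasd f x d1 -> hasd g x d2 ->
  hasd (fun y => f y * g y) x (d1 * g x + f x * d2).
Proof.
case=> a1 b1 c1 e1 [a2 b2 c2 e2].
have eR : (fun y => complex.Re (f y * g y)) = (fun y =>
   (complex.Re (f y) * complex.Re (g y)) + - (complex.Im (f y) * complex.Im (g y))).
  by apply: funext => y; rewrite ReM.
have eI : (fun y => complex.Im (f y * g y)) = (fun y =>
   complex.Re (f y) * complex.Im (g y) + complex.Im (f y) * complex.Re (g y)).
  by apply: funext => y; rewrite ImM.
have [m1 n1] := rM a1 a2; have [m2 n2] := rM b1 b2.
have [m3 n3] := rM a1 b2; have [m4 n4] := rM b1 a2.
have [m5 n5] := rN m2.
have [p1 q1] := rD m1 m5; have [p2 q2] := rD m3 m4.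
split; rewrite ?eR ?eI //.
  by rewrite q1 n5 n1 n2 !ReD !ReM c1 c2 e1 e2; ring.
by rewrite q2 n3 n4 !ImD !ImM c1 c2 e1 e2; ring.
Qed.

Lemma hasd_cst (k : C) x : hasd (fun _ => k) x 0.
Proof. have [p q] := rC (complex.Re k) x; have [p' q'] := rC (complex.Im k) x. by split. Qed.

Lemma hasd_conj f x d : hasd f x d -> hasd (fun y => (f y)^*) x (d^*).
Proof.
case=> a1 b1 c1 e1.
have eR : (fun y => complex.Re ((f y)^*)) = (fun y => complex.Re (f y)).
  by apply: funext => y; rewrite ReJ.
have eI : (fun y => complex.Im ((f y)^*)) = (fun y => - complex.Im (f y)).
  by apply: funext => y; rewrite ImJ.
have [p q] := rN b1.
by split; rewrite ?eR ?eI // ?q ?ReJ ?ImJ ?c1 ?e1.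
Qed.

Lemma hasd_real (F : R -> R) x : derivable F x 1 -> hasd (fun y => (F y)%:C) x (derive1 F x)%:C.
Proof. move=> dF; have [p q] := rC 0 x; by split. Qed.

Lemma hasd_uniq f x d1 d2 : hasd f x d1 -> hasd f x d2 -> d1 = d2.
Proof. by case=> _ _ c1 e1 [_ _ c2 e2]; apply: C_ext; rewrite -?c1 -?c2 -?e1 -?e2. Qed.

Lemma hasd_ext f g x d : (forall y, f y = g y) -> hasd f x d -> hasd g x d.
Proof. by move=> e; have -> : f = g by apply: funext. Qed.

Definition hasD f x := exists d, hasd f x d.

Lemma hasD_inv f x : f x != 0 -> hasD f x -> hasD (fun y => (f y)^-1) x.
Proof.
move=> nz [d [a1 b1 c1 e1]].
pose n2 := fun y => complex.Re (f y) * complex.Re (f y) + complex.Im (f y) * complex.Im (f y).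
have [m1 _] := rM a1 a1; have [m2 _] := rM b1 b1; have [m3 _] := rD m1 m2.
have n2nz : n2 x != 0.
  rewrite /n2; move: nz; case: (f x) => a b /= nz.
  apply/eqP => h; move/eqP: nz; apply; apply/eqP.
  have : a^+2 + b^+2 == 0 by rewrite !expr2 h.
  by rewrite paddr_eq0 ?sqr_ge0 // !sqrf_eq0 => /andP[/eqP-> /eqP->].
have dv := rV n2nz m3.
have h1 := hasd_real dv.
have h2 := hasd_conj (And4 a1 b1 c1 e1).
have h3 := hasd_mul h2 h1.
eexists; apply: hasd_ext h3 => y.
case E: (f y) => [a b]; rewrite /n2 E /=.
apply: C_ext => /=; rewrite ?mulr0 ?mul0r ?subr0 ?addr0; ring.
Qed.
End H.

Section M.
Variable R : realType.
Local Notation C := (R[i]).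

Lemma hasd_sum (I : Type) (r : seq I) (F : I -> R -> C) (d : I -> C) x :
  (forall i, hasd (F i) x (d i)) ->
  hasd (fun y => \sum_(i <- r) F i y) x (\sum_(i <- r) d i).
Proof.
move=> h; elim: r => [|a r IH].
  by rewrite big_nil; apply: hasd_ext (hasd_cst 0 x) => y; rewrite big_nil.
rewrite big_cons; apply: hasd_ext (hasd_add (h a) IH) => y; by rewrite big_cons.
Qed.

Lemma hasD_sum (I : Type) (r : seq I) (F : I -> R -> C) x :
  (forall i, hasD (F i) x) -> hasD (fun y => \sum_(i <- r) F i y) x.
Proof.
move=> h; elim: r => [|a r [d IH]].
  by exists 0; apply: hasd_ext (hasd_cst 0 x) => y; rewrite big_nil.
have [e he] := h a.
by eexists; apply: hasd_ext (hasd_add he IH) => y; rewrite big_cons.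
Qed.

Lemma hasD_prod (I : Type) (r : seq I) (F : I -> R -> C) x :
  (forall i, hasD (F i) x) -> hasD (fun y => \prod_(i <- r) F i y) x.
Proof.
move=> h; elim: r => [|a r [d IH]].
  by exists 0; apply: hasd_ext (hasd_cst 1 x) => y; rewrite big_nil.
have [e he] := h a.
by eexists; apply: hasd_ext (hasd_mul he IH) => y; rewrite big_cons.
Qed.

Lemma hasD_mul (f g : R -> C) (x : R) : hasD f x -> hasD g x -> hasD (fun y => f y * g y) x.
Proof. by move=> [d1 h1] [d2 h2]; eexists; apply: hasd_mul h1 h2. Qed.

Lemma hasD_cst (k : C) (x : R) : hasD (fun _ : R => k) x.
Proof. by exists 0; apply: hasd_cst. Qed.

Definition hasdM m n (F : R -> 'M[C]_(m, n)) x (D : 'M[C]_(m, n)) :=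
  forall i j, hasd (fun y => F y i j) x (D i j).
Definition hasDM m n (F : R -> 'M[C]_(m, n)) x :=
  forall i j, hasD (fun y => F y i j) x.

Lemma hasDM_ex m n (F : R -> 'M[C]_(m, n)) x : hasDM F x -> exists D, hasdM F x D.
Proof.
move=> h.
have h' : forall p : 'I_m * 'I_n, exists d, hasd (fun y => F y p.1 p.2) x d.
  by move=> [i j]; exact: h.
have [g hg] := choice h'.
by exists (\matrix_(i, j) g (i, j)) => i j; rewrite mxE; exact: (hg (i, j)).
Qed.

Lemma hasdM_mul m n p (F : R -> 'M[C]_(m, n)) (G : R -> 'M[C]_(n, p)) x D1 D2 :
  hasdM F x D1 -> hasdM G x D2 ->
  hasdM (fun y => F y *m G y) x (D1 *m G x + F x *m D2).
Proof.
move=> h1 h2 i j.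
have := hasd_sum (index_enum 'I_n) (fun k => hasd_mul (h1 i k) (h2 k j)).
move=> h; apply: hasd_ext; last first.
  rewrite !mxE -big_split /=; exact: h.
by move=> y; rewrite mxE.
Qed.

Lemma hasdM_add m n (F G : R -> 'M[C]_(m, n)) x D1 D2 :
  hasdM F x D1 -> hasdM G x D2 -> hasdM (fun y => F y + G y) x (D1 + D2).
Proof.
move=> h1 h2 i j; rewrite mxE.
by apply: hasd_ext (hasd_add (h1 i j) (h2 i j)) => y; rewrite mxE.
Qed.

Lemma hasdM_scale m n (c : C) (F : R -> 'M[C]_(m, n)) x D :
  hasdM F x D -> hasdM (fun y => c *: F y) x (c *: D).
Proof.
move=> h i j; rewrite mxE.
have := hasd_mul (hasd_cst c x) (h i j).
rewrite mul0r add0r => h'.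
by apply: hasd_ext h' => y; rewrite mxE.
Qed.

Lemma hasdM_cst m n (A : 'M[C]_(m, n)) x : hasdM (fun _ => A) x 0.
Proof. by move=> i j; rewrite mxE; apply: hasd_cst. Qed.

Lemma hasdM_conj m n (F : R -> 'M[C]_(m, n)) x D :
  hasdM F x D -> hasdM (fun y => Defs.conjmx (F y)) x (Defs.conjmx D).
Proof.
move=> h i j; rewrite /Defs.conjmx !mxE.
by apply: hasd_ext (hasd_conj (h j i)) => y; rewrite !mxE.
Qed.

Lemma hasdM_uniq m n (F : R -> 'M[C]_(m, n)) x D1 D2 :
  hasdM F x D1 -> hasdM F x D2 -> D1 = D2.
Proof. by move=> h1 h2; apply/matrixP => i j; apply: hasd_uniq (h1 i j) (h2 i j). Qed.

Lemma hasdM_ext m n (F G : R -> 'M[C]_(m, n)) x D :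
  (forall y, F y = G y) -> hasdM F x D -> hasdM G x D.
Proof. by move=> e; have -> : F = G by apply: funext. Qed.

Lemma hasD_ext (f g : R -> C) x : (forall y, f y = g y) -> hasD f x -> hasD g x.
Proof. by move=> e [d hd]; exists d; apply: hasd_ext hd. Qed.

Lemma hasD_det n (F : R -> 'M[C]_n) x : hasDM F x -> hasD (fun y => \det (F y)) x.
Proof.
move=> h; apply: hasD_sum => s.
apply: hasD_mul; first exact: hasD_cst.
by apply: hasD_prod => i; exact: h.
Qed.

Lemma hasDM_inv n (F : R -> 'M[C]_n) x : (forall y, F y \in unitmx) ->
  hasDM F x -> hasDM (fun y => invmx (F y)) x.
Proof.
move=> u h i j.
have e : forall y, invmx (F y) i j = (\det (F y))^-1 * cofactor (F y) j i.
  by move=> y; rewrite /invmx u !mxE.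
have [d hd] : hasD (fun y => (\det (F y))^-1 * cofactor (F y) j i) x.
  apply: hasD_mul.
    apply: hasD_inv; last exact: hasD_det.
    by have := u x; rewrite unitmxE unitfE.
  apply: hasD_mul; first exact: hasD_cst.
  by apply: hasD_det => k l; apply: hasD_ext (h (lift j k) (lift i l)) => y; rewrite !mxE.
exists d; by apply: hasd_ext hd => y; rewrite e.
Qed.
End M.

Section M2.
Variable R : realType.
Local Notation C := (R[i]).

Lemma hasdM_inv n (F : R -> 'M[C]_n) x D : (forall y, F y \in unitmx) ->
  hasdM F x D -> hasdM (fun y => invmx (F y)) x (- (invmx (F x) *m D *m invmx (F x))).
Proof.
move=> u h.
have hD : hasDM F x by move=> i j; exists (D i j); exact: h.
have [X hX] := hasDM_ex (hasDM_inv u hD).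
have h1 := hasdM_mul h hX.
have h2 : hasdM (fun y => F y *m invmx (F y)) x 0.
  by apply: hasdM_ext (hasdM_cst 1%:M x) => y; rewrite mulmxV.
have e := hasdM_uniq h1 h2.
have -> : - (invmx (F x) *m D *m invmx (F x)) = X.
  have : invmx (F x) *m (D *m invmx (F x) + F x *m X) = 0 by rewrite e mulmx0.
  rewrite mulmxDr mulmxA [X in _ + X]mulmxA mulVmx // mul1mx => /eqP.
  by rewrite addr_eq0 => /eqP ->; rewrite opprK.
exact: hX.
Qed.
End M2.

Section C1.
Variable R : realType.
Local Notation C := (R[i]).

Lemma pdx_hasd (f : R -> R -> C) x t :
  derivable (fun y => complex.Re (f y t)) x 1 ->
  derivable (fun y => complex.Im (f y t)) x 1 ->
  hasd (fun y => f y t) x (pdx f x t).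
Proof.
move=> h1 h2; split => //; rewrite /pdx.
  by rewrite ReD /=; ring.
by rewrite ImD /=; ring.
Qed.

Lemma sigma3E (i j : 'I_2) : sigma3 R i j = if i == j then (if i == 0 then 1 else -1) else 0.
Proof. by rewrite mxE. Qed.

Lemma Uphi0 (u : R -> R -> C) x t l (v : 'cV[C]_2) :
  (Umat (Qmat u x t) l *m v) 0 0 = - 2%:R * 'i%C * l ^+ 2 * v 0 0 + 2%:R * l * ('i%C * u x t) * v 1 0.
Proof.
rewrite mxE big_ord_recr big_ord1 /= !mxE /=.
have -> : widen_ord (leqnSn 1) ord0 = 0 :> 'I_2 by apply: val_inj.
have -> : ord_max = 1 :> 'I_2 by apply: val_inj.
ring.
Qed.
Lemma Uphi1 (u : R -> R -> C) x t l (v : 'cV[C]_2) :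
  (Umat (Qmat u x t) l *m v) 1 0 = 2%:R * 'i%C * l ^+ 2 * v 1 0 + 2%:R * l * ('i%C * (u x t)^*) * v 0 0.
Proof.
rewrite mxE big_ord_recr big_ord1 /= !mxE /=.
have -> : widen_ord (leqnSn 1) ord0 = 0 :> 'I_2 by apply: val_inj.
have -> : ord_max = 1 :> 'I_2 by apply: val_inj.
ring.
Qed.
End C1.

Section C2.
Variable R : realType.
Local Notation C := (R[i]).

Lemma conj_i : @complex.conjc R ('i%C) = - 'i%C.
Proof. by apply: C_ext; rewrite /= ?oppr0. Qed.

Local Notation cj := (@complex.conjc R).
Lemma cD (a b : C) : cj (a + b) = cj a + cj b. Proof. exact: rmorphD. Qed.
Lemma cM (a b : C) : cj (a * b) = cj a * cj b. Proof. exact: rmorphM. Qed.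
Lemma cN (a : C) : cj (- a) = - cj a. Proof. exact: rmorphN. Qed.
Lemma cB (a b : C) : cj (a - b) = cj a - cj b. Proof. exact: rmorphB. Qed.
Lemma cX (a : C) n : cj (a ^+ n) = cj a ^+ n. Proof. exact: rmorphXn. Qed.
Lemma c2 : cj (2%:R : C) = 2%:R. Proof. exact: conjc_nat. Qed.
Lemma c4 : cj (4%:R : C) = 4%:R. Proof. exact: conjc_nat. Qed.
Lemma cK (a : C) : cj (cj a) = a. Proof. exact: conjcK. Qed.

Lemma hasd_eq (f : R -> C) x d d' : hasd f x d -> d = d' -> hasd f x d'.
Proof. by move=> h <-. Qed.

Lemma conjmxE m n (A : 'M[C]_(m, n)) i j : Defs.conjmx A i j = (A j i)^*.
Proof. by rewrite !mxE. Qed.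

Lemma sum2 (F : 'I_2 -> C) : \sum_k F k = F 0 + F 1.
Proof. by rewrite big_ord_recr big_ord1; congr (F _ + F _); apply: val_inj. Qed.

Lemma Mmat_entry N (lam : 'I_N -> C) phi x t i j :
  Mmat lam phi x t i j =
  (((phi j x t 0 0)^* * phi i x t 0 0 + (phi j x t 1 0)^* * phi i x t 1 0)
     * ((lam j)^* - lam i)^-1
   + - (((phi j x t 0 0)^* * phi i x t 0 0 + - ((phi j x t 1 0)^* * phi i x t 1 0))
     * ((lam j)^* + lam i)^-1)) * (lam i * (lam j)^*).
Proof.
rewrite !mxE !sum2 !mxE !sum2 !mxE /=. ring.
Qed.
Lemma cV (a : C) : cj (a^-1) = (cj a)^-1. Proof. exact: conjc_inv. Qed.

Lemma mulLamE N (lam : 'I_N -> C) m (A : 'M[C]_(N, m)) i j :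
  (Lam lam *m A) i j = lam i * A i j.
Proof.
rewrite mxE (bigD1 i) //= big1 ?addr0; first by rewrite mxE eqxx.
by move=> k /negPf nk; rewrite mxE eq_sym nk mul0r.
Qed.
Lemma mulmxLamE N (lam : 'I_N -> C) m (A : 'M[C]_(m, N)) i j :
  (A *m Lam lam) i j = A i j * lam j.
Proof.
rewrite mxE (bigD1 j) //= big1 ?addr0; first by rewrite mxE eqxx.
by move=> k /negPf nk; rewrite mxE nk mulr0.
Qed.
Lemma conjLam N (lam : 'I_N -> C) : Defs.conjmx (Lam lam) = Lam (fun i => cj (lam i)).
Proof.
apply/matrixP => i j; rewrite !mxE.
have [->|ne] := eqVneq i j; rewrite ?eqxx //.
by apply: C_ext; rewrite /= ?oppr0.
Qed.
Lemma mulcrE n m (v : 'M[C]_(n, 1)) (w : 'M[C]_(1, m)) i j :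
  (v *m w) i j = v i 0 * w 0 j.
Proof. by rewrite mxE big_ord1. Qed.
Lemma mulLam N (lam : 'I_N -> C) m (A : 'M[C]_(N, m)) :
  Lam lam *m A = \matrix_(i, j) (lam i * A i j).
Proof. by apply/matrixP => i j; rewrite mulLamE mxE. Qed.
Lemma mulmxLam N (lam : 'I_N -> C) m (A : 'M[C]_(m, N)) :
  A *m Lam lam = \matrix_(i, j) (A i j * lam j).
Proof. by apply/matrixP => i j; rewrite mulmxLamE mxE. Qed.
Lemma mulcr n m (v : 'M[C]_(n, 1)) (w : 'M[C]_(1, m)) :
  v *m w = \matrix_(i, j) (v i 0 * w 0 j).
Proof. by apply/matrixP => i j; rewrite mulcrE mxE. Qed.
End C2.

Section C3.
Variable R : realType.
Local Notation C := (R[i]).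
Variables (N : nat) (u : R -> R -> C) (lam : 'I_N -> C) (phi : 'I_N -> R -> R -> 'cV[C]_2).
Hypothesis Hlam : forall i j, (lam j)^* != lam i /\ (lam j)^* != - lam i.
Hypothesis Hlax : forall i, lax_solution u (lam i) (phi i).
Variable t : R.

Lemma ha_i i x : hasd (fun y => phi i y t 0 0) x
  (- 2%:R * 'i%C * lam i ^+ 2 * phi i x t 0 0 + 2%:R * lam i * ('i%C * u x t) * phi i x t 1 0).
Proof.
have [p0 [p1 E]] := Hlax i.
have [d1 [d2 _]] := p0 x t.
have h := @pdx_hasd R (fun y s => phi i y s 0 0) x t d1 d2.
by rewrite -Uphi0 -(E x t 0).1.
Qed.

Lemma hb_i i x : hasd (fun y => phi i y t 1 0) x
  (2%:R * 'i%C * lam i ^+ 2 * phi i x t 1 0 + 2%:R * lam i * ('i%C * (u x t)^*) * phi i x t 0 0).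
Proof.
have [p0 [p1 E]] := Hlax i.
have [d1 [d2 _]] := p1 x t.
have h := @pdx_hasd R (fun y s => phi i y s 1 0) x t d1 d2.
by rewrite -Uphi1 -(E x t 1).1.
Qed.

Definition Mxf x : 'M[C]_N := \matrix_(i, j) (4%:R * 'i%C * lam i * (lam j)^* *
  (lam i * phi i x t 0 0 * (phi j x t 0 0)^* - (lam j)^* * phi i x t 1 0 * (phi j x t 1 0)^*
   - u x t * phi i x t 1 0 * (phi j x t 0 0)^*)).

Lemma hM x : hasdM (fun y => Mmat lam phi y t) x (Mxf x).
Proof.
move=> i j.
have [n1 n2] := Hlam i j.
have e := hasd_mul (hasd_add (hasd_mul (hasd_add (hasd_mul (hasd_conj (ha_i j x)) (ha_i i x))
   (hasd_mul (hasd_conj (hb_i j x)) (hb_i i x))) (hasd_cst (((lam j)^* - lam i)^-1) x))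
   (hasd_opp (hasd_mul (hasd_add (hasd_mul (hasd_conj (ha_i j x)) (ha_i i x))
   (hasd_opp (hasd_mul (hasd_conj (hb_i j x)) (hb_i i x)))) (hasd_cst (((lam j)^* + lam i)^-1) x))))
   (hasd_cst (lam i * (lam j)^*) x).
apply: hasd_ext; last apply: (hasd_eq e).
  by move=> y /=; rewrite Mmat_entry.
rewrite mxE.
rewrite !(cD, cM, cN, cX, c2, conj_i, cK).
have n1' : (lam j)^* - lam i != 0 by rewrite subr_eq0.
have n2' : (lam j)^* + lam i != 0 by rewrite addr_eq0.
field.
by rewrite n1' n2'.
Qed.

Local Notation a := (fun y => phicomp phi 0 y t).
Local Notation b := (fun y => phicomp phi 1 y t).
Local Notation Lm := (Lam lam).
Local Notation Ld := (Defs.conjmx (Lam lam)).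
Local Notation cj := (@complex.conjc R).

Definition ad x : 'cV[C]_N := (- 2%:R * 'i%C) *: (Lm *m (Lm *m a x)) + (2%:R * 'i%C * u x t) *: (Lm *m b x).
Definition bd x : 'cV[C]_N := (2%:R * 'i%C) *: (Lm *m (Lm *m b x)) + (2%:R * 'i%C * cj (u x t)) *: (Lm *m a x).

Lemma phicompE k x i j : phicomp phi k x t i j = phi i x t k 0.
Proof. by rewrite mxE. Qed.

Lemma haM x : hasdM a x (ad x).
Proof.
move=> i j; rewrite (ord1 j).
apply: hasd_ext; last apply: (hasd_eq (ha_i i x)).
  by move=> y; rewrite phicompE.
rewrite /ad !mulLam !mxE; ring.
Qed.

Lemma hbM x : hasdM b x (bd x).
Proof.
move=> i j; rewrite (ord1 j).
apply: hasd_ext; last apply: (hasd_eq (hb_i i x)).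
  by move=> y; rewrite phicompE.
rewrite /bd !mulLam !mxE; ring.
Qed.

Lemma MxfE x : Mxf x = (4%:R * 'i%C) *: (Lm *m (Lm *m (a x *m (Defs.conjmx (a x) *m Ld)))
   - Lm *m (b x *m (Defs.conjmx (b x) *m Ld *m Ld)) - u x t *: (Lm *m (b x *m (Defs.conjmx (a x) *m Ld)))).
Proof.
apply/matrixP => i j.
rewrite conjLam !mulmxLam !mulcr !mulLam !mxE; ring.
Qed.

Lemma S1 x : Mmat lam phi x t *m Ld *m Ld - Lm *m (Lm *m Mmat lam phi x t)
  = 2%:R *: (Lm *m (Lm *m (a x *m (Defs.conjmx (a x) *m Ld))) + Lm *m (b x *m (Defs.conjmx (b x) *m Ld *m Ld))).
Proof.
move: (Mmat_entry lam phi x t); move: (Mmat lam phi x t) => M ME.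
apply/matrixP => i j.
rewrite conjLam !mulmxLam !mulcr !mulLam !mxE !ME.
have [n1 n2] := Hlam i j.
have n1' : cj (lam j) - lam i != 0 by rewrite subr_eq0.
have n2' : cj (lam j) + lam i != 0 by rewrite addr_eq0.
field.
by rewrite n1' n2'.
Qed.

Lemma S2 x : Mmat lam phi x t *m Ld + Lm *m Defs.conjmx (Mmat lam phi x t)
  = 2%:R *: (Lm *m (b x *m (Defs.conjmx (b x) *m Ld))).
Proof.
move: (Mmat_entry lam phi x t); move: (Mmat lam phi x t) => M ME.
apply/matrixP => i j.
rewrite conjLam !mulmxLam !mulcr !mulLam !mxE !ME.
rewrite !(cD, cM, cN, cV, cB, cK).
have [n1 n2] := Hlam i j.
have [n3 n4] := Hlam j i.
have n1' : cj (lam j) - lam i != 0 by rewrite subr_eq0.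
have n2' : cj (lam j) + lam i != 0 by rewrite addr_eq0.
have n3' : lam i - cj (lam j) != 0 by rewrite subr_eq0 eq_sym.
have n4' : lam i + cj (lam j) != 0 by rewrite addrC addr_eq0.
field.
by apply/and3P; split; [exact: n4' | exact: n3' | exact: n1'].
Qed.
End C3.

Section D1.
Variable R : realType.
Local Notation C := (R[i]).
Local Notation cj := (@complex.conjc R).
Local Notation cmx := (@Defs.conjmx R _ _).

Lemma cmxM m n p (A : 'M[C]_(m, n)) (B : 'M[C]_(n, p)) : cmx (A *m B) = cmx B *m cmx A.
Proof. by rewrite /Defs.conjmx map_mxM trmx_mul. Qed.
Lemma cmxD m n (A B : 'M[C]_(m, n)) : cmx (A + B) = cmx A + cmx B.
Proof. by rewrite /Defs.conjmx map_mxD linearD. Qed.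
Lemma cmxN m n (A : 'M[C]_(m, n)) : cmx (- A) = - cmx A.
Proof. by rewrite /Defs.conjmx map_mxN linearN. Qed.
Lemma cmxZ m n c (A : 'M[C]_(m, n)) : cmx (c *: A) = cj c *: cmx A.
Proof. by rewrite /Defs.conjmx map_mxZ linearZ. Qed.
Lemma cmxK m n (A : 'M[C]_(m, n)) : cmx (cmx A) = A.
Proof. by apply/matrixP => i j; rewrite !mxE cK. Qed.
Lemma cmxV n (A : 'M[C]_n) : cmx (invmx A) = invmx (cmx A).
Proof. by rewrite /Defs.conjmx map_invmx trmx_inv. Qed.
Lemma cmx00 (P : 'M[C]_1) : cmx P 0 0 = cj (P 0 0).
Proof. by rewrite !mxE. Qed.
Lemma s1M n (P : 'M[C]_(1, n)) (Q : 'M[C]_(n, 1)) (P' : 'M[C]_(1, 1)) (Q' : 'M[C]_(1,1)) :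
  (P' *m Q') 0 0 = P' 0 0 * Q' 0 0.
Proof. by rewrite mulcrE. Qed.
End D1.

Section D2.
Variable R : realType.
Local Notation C := (R[i]).
Local Notation cj := (@complex.conjc R).
Local Notation cmx := (@Defs.conjmx R _ _).
Local Notation I := ('i%C : C).

Lemma entD m (A B : 'M[C]_(m,1)) i : (A + B) i 0 = A i 0 + B i 0. Proof. by rewrite mxE. Qed.
Lemma entB m (A B : 'M[C]_(m,1)) i : (A - B) i 0 = A i 0 - B i 0. Proof. by rewrite !mxE. Qed.
Lemma entN m (A : 'M[C]_(m,1)) i : (- A) i 0 = - A i 0. Proof. by rewrite mxE. Qed.
Lemma entZ m c (A : 'M[C]_(m,1)) i : (c *: A) i 0 = c * A i 0. Proof. by rewrite mxE. Qed.

Lemma mA m n p q (A : 'M[C]_(m, n)) (B : 'M[C]_(n, p)) (D : 'M[C]_(p, q)) : A *m (B *m D) = A *m B *m D.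
Proof. exact: mulmxA. Qed.
Lemma mDl m n p (A B : 'M[C]_(m, n)) (D : 'M[C]_(n, p)) : (A + B) *m D = A *m D + B *m D.
Proof. exact: mulmxDl. Qed.
Lemma mDr m n p (A : 'M[C]_(m, n)) (B D : 'M[C]_(n, p)) : A *m (B + D) = A *m B + A *m D.
Proof. exact: mulmxDr. Qed.
Lemma mBl m n p (A B : 'M[C]_(m, n)) (D : 'M[C]_(n, p)) : (A - B) *m D = A *m D - B *m D.
Proof. exact: mulmxBl. Qed.
Lemma mBr m n p (A : 'M[C]_(m, n)) (B D : 'M[C]_(n, p)) : A *m (B - D) = A *m B - A *m D.
Proof. exact: mulmxBr. Qed.
Lemma mN m n p (A : 'M[C]_(m, n)) (B : 'M[C]_(n, p)) : A *m (- B) = - (A *m B).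
Proof. exact: mulmxN. Qed.
Lemma mNl m n p (A : 'M[C]_(m, n)) (B : 'M[C]_(n, p)) : (- A) *m B = - (A *m B).
Proof. exact: mulNmx. Qed.
Lemma sAl m n p c (A : 'M[C]_(m, n)) (B : 'M[C]_(n, p)) : (c *: A) *m B = c *: (A *m B).
Proof. by rewrite scalemxAl. Qed.
Lemma sAr m n p c (A : 'M[C]_(m, n)) (B : 'M[C]_(n, p)) : A *m (c *: B) = c *: (A *m B).
Proof. by rewrite scalemxAr. Qed.
Lemma m1 m n (A : 'M[C]_(m, n)) : A *m 1%:M = A. Proof. exact: mulmx1. Qed.
Lemma m1l m n (A : 'M[C]_(m, n)) : 1%:M *m A = A. Proof. exact: mul1mx. Qed.

Lemma final N (M L X : 'M[C]_N) (a b : 'cV[C]_N) (u : C) :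
  X *m M = 1%:M -> M *m X = 1%:M ->
  M *m cmx L *m cmx L - L *m (L *m M) = 2%:R *: (L *m (L *m (a *m (cmx a *m cmx L))) + L *m (b *m (cmx b *m cmx L *m cmx L))) ->
  M *m cmx L + L *m cmx M = 2%:R *: (L *m (b *m (cmx b *m cmx L))) ->
  u + I * (((cmx ((2%:R * I) *: (L *m (L *m b)) + (2%:R * I * cj u) *: (L *m a)) *m X
     + cmx b *m (- (X *m ((4%:R * I) *: (L *m (L *m (a *m (cmx a *m cmx L)))
          - L *m (b *m (cmx b *m cmx L *m cmx L)) - u *: (L *m (b *m (cmx a *m cmx L))))) *m X)))
       *m a
     + cmx b *m X *m ((- 2%:R * I) *: (L *m (L *m a)) + (2%:R * I * u) *: (L *m b))) 0 0)
  = (1 + 2%:R * (cmx a *m cmx L *m X *m a) 0 0)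
      / (1 - 2%:R * (cmx b *m cmx L *m cmx X *m b) 0 0) * u
    + 4%:R * (cmx b *m (cmx L ^+ 2) *m X *m a) 0 0
      / (1 - 2%:R * (cmx b *m cmx L *m cmx X *m b) 0 0).
Proof.
move=> XM MX hS1 hS2.
rewrite !(cmxD, cmxZ, cmxM, cmxK).
move: hS1 hS2; move eLd: (cmx L) => Ld hS1 hS2.
have cXM : cmx M *m cmx X = 1%:M.
  rewrite -cmxM XM; apply/matrixP => i j; rewrite !mxE.
  by rewrite eq_sym; exact: conjc_nat.
have L2 : Ld ^+ 2 = Ld *m Ld by rewrite expr2 mulmxE.
rewrite L2.
have eT1a : forall c, ((c *: (cmx b *m Ld *m Ld)) *m X *m a) 0 0 = c * (cmx b *m (Ld *m Ld) *m X *m a) 0 0.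
  by move=> c; rewrite !sAl entZ !mA.
have eT1b : forall c, ((c *: (cmx a *m Ld)) *m X *m a) 0 0 = c * (cmx a *m Ld *m X *m a) 0 0.
  by move=> c; rewrite !sAl entZ.
have eT2 : forall c,
   (cmx b *m - (X *m (c *: (L *m (L *m (a *m (cmx a *m Ld))) - L *m (b *m (cmx b *m Ld *m Ld))
     - u *: (L *m (b *m (cmx a *m Ld))))) *m X) *m a) 0 0 = - c * ((cmx b *m X *m L *m L *m a) 0 0 * (cmx a *m Ld *m X *m a) 0 0 - (cmx b *m X *m L *m b) 0 0 * (cmx b *m (Ld *m Ld) *m X *m a) 0 0 - u * ((cmx b *m X *m L *m b) 0 0 * (cmx a *m Ld *m X *m a) 0 0)).
  move=> c; rewrite mN mNl entN sAr sAl sAr sAl entZ.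
  rewrite !(mBr, mBl) !sAr !sAl ?sAr ?sAl.
  rewrite entB entB entZ.
  have sP : cmx b *m (X *m (L *m (L *m (a *m (cmx a *m Ld)))) *m X) *m a = (cmx b *m X *m L *m L *m a) *m (cmx a *m Ld *m X *m a) by rewrite !mA.
  have sQ : cmx b *m (X *m (L *m (b *m (cmx b *m Ld *m Ld))) *m X) *m a = (cmx b *m X *m L *m b) *m (cmx b *m (Ld *m Ld) *m X *m a) by rewrite !mA.
  have sR : cmx b *m (X *m (L *m (b *m (cmx a *m Ld))) *m X) *m a = (cmx b *m X *m L *m b) *m (cmx a *m Ld *m X *m a) by rewrite !mA.
  rewrite mulNr; congr (- _); congr (c * (_ - _ - u * _)).
  - by rewrite sP mulcrE.
  - by rewrite sQ mulcrE.
  - by rewrite sR mulcrE.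
have eT3 : forall d1 d2, (cmx b *m X *m (d1 *: (L *m (L *m a)) + d2 *: (L *m b))) 0 0 = d1 * (cmx b *m X *m L *m L *m a) 0 0 + d2 * (cmx b *m X *m L *m b) 0 0.
  move=> d1 d2; rewrite mDr !sAr entD !entZ.
  by rewrite !mA.
rewrite !mDl entD entD entD eT1a eT1b eT2 eT3.
rewrite !(cM, c2, conj_i, cK).
have XMc : forall p (Y : 'M[C]_(N, p)), X *m (M *m Y) = Y by move=> p Y; rewrite mA XM m1l.
have MXc : forall p (Y : 'M[C]_(N, p)), M *m (X *m Y) = Y by move=> p Y; rewrite mA MX m1l.
have R1 : (cmx b *m (Ld *m Ld) *m X *m a) 0 0 - (cmx b *m X *m L *m L *m a) 0 0 = 2%:R * ((cmx b *m X *m L *m L *m a) 0 0 * (cmx a *m Ld *m X *m a) 0 0 + (cmx b *m X *m L *m b) 0 0 * (cmx b *m (Ld *m Ld) *m X *m a) 0 0).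
  have h := congr1 (fun Z => (cmx b *m X *m Z *m X *m a) 0 0) hS1.
  rewrite /= mBr mBl mBl entB in h.
  have e1 : cmx b *m X *m (M *m Ld *m Ld) *m X *m a = cmx b *m (Ld *m Ld) *m X *m a.
    by rewrite -!mA XMc.
  have e2 : cmx b *m X *m (L *m (L *m M)) *m X *m a = cmx b *m X *m L *m L *m a.
    by rewrite -!mA MXc.
  have e3 : cmx b *m X *m (2%:R *: (L *m (L *m (a *m (cmx a *m Ld))) + L *m (b *m (cmx b *m Ld *m Ld)))) *m X *m a
     = 2%:R *: ((cmx b *m X *m L *m L *m a) *m (cmx a *m Ld *m X *m a) + (cmx b *m X *m L *m b) *m (cmx b *m (Ld *m Ld) *m X *m a)).
    by rewrite !sAr !sAl mDr !mDl !mA.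
  by rewrite e1 e2 e3 entZ entD !mulcrE in h.
have cXMc : forall p (Y : 'M[C]_(N, p)), cmx M *m (cmx X *m Y) = Y by move=> p Y; rewrite mA cXM m1l.
have R2 : (cmx b *m Ld *m cmx X *m b) 0 0 + (cmx b *m X *m L *m b) 0 0 = 2%:R * ((cmx b *m X *m L *m b) 0 0 * (cmx b *m Ld *m cmx X *m b) 0 0).
  have h := congr1 (fun Z => (cmx b *m X *m Z *m cmx X *m b) 0 0) hS2.
  rewrite /= mDr mDl mDl entD in h.
  have e1 : cmx b *m X *m (M *m Ld) *m cmx X *m b = cmx b *m Ld *m cmx X *m b.
    by rewrite -!mA XMc.
  have e2 : cmx b *m X *m (L *m cmx M) *m cmx X *m b = cmx b *m X *m L *m b.
    by rewrite -!mA cXMc.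
  have e3 : cmx b *m X *m (2%:R *: (L *m (b *m (cmx b *m Ld)))) *m cmx X *m b
     = 2%:R *: ((cmx b *m X *m L *m b) *m (cmx b *m Ld *m cmx X *m b)).
    by rewrite !sAr !sAl !mA.
  by rewrite e1 e2 e3 entZ !mulcrE in h.
move: R1 R2.
move: ((cmx b *m (Ld *m Ld) *m X *m a) 0 0) => ga.
move: ((cmx b *m X *m L *m L *m a) 0 0) => de.
move: ((cmx a *m Ld *m X *m a) 0 0) => al.
move: ((cmx b *m X *m L *m b) 0 0) => be.
move: ((cmx b *m Ld *m cmx X *m b) 0 0) => bc.
move=> R1 R2.
have hI : I * I = -1 by rewrite -expr2 sqr_i.
have eS : 2%:R * - I * ga + 2%:R * - I * u * al + - (4%:R * I) * (de * al - be * ga - u * (be * al))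
   + (- 2%:R * I * de + 2%:R * I * u * be)
   = I * (- 2%:R * ga - 2%:R * u * al - 4%:R * (de * al - be * ga - u * (be * al)) - 2%:R * de + 2%:R * u * be) by ring.
rewrite eS mulrA hI.
have hprod : (1 - 2%:R * be) * (1 - 2%:R * bc) = 1.
  have -> : (1 - 2%:R * be) * (1 - 2%:R * bc) = 1 - 2%:R * (bc + be) + 4%:R * (be * bc) by ring.
  rewrite R2; ring.
have nz : 1 - 2%:R * bc != 0.
  by apply/eqP => h0; move: hprod; rewrite h0 mulr0 => /eqP; rewrite eq_sym oner_eq0.
have hinv : (1 - 2%:R * bc)^-1 = 1 - 2%:R * be by apply: (mulIf nz); rewrite mulVf // hprod.
rewrite hinv.
apply/eqP; rewrite -subr_eq0.
set lhs := (X in X == 0).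
have -> : lhs = - 2%:R * ((ga - de) - 2%:R * (de * al + be * ga)) by rewrite /lhs; ring.
by rewrite R1 subrr mulr0.
Qed.
End D2.

Unset Implicit Arguments. Set Strict Implicit.

Lemma hasd_pdx (R : realType) (f : R -> R -> R[i]) x t d :
  hasd (fun y => f y t) x d -> pdx f x t = d.
Proof.
case=> _ _ c e; rewrite /pdx c e.
by apply: C_ext; rewrite /= ?mulr0 ?mul0r ?mulr1 ?mul1r ?subr0 ?addr0 ?add0r.
Qed.

Theorem mainTheorem2 (R : realType) (N : nat) (u : R -> R -> R[i])
  (lam : 'I_N -> R[i]) (phi : 'I_N -> R -> R -> 'cV[R[i]]_2) :
  (0 < N)%N ->
  bounded2 u -> smooth2 u -> is_DNLS_solution u ->
  (forall i j, conjc (lam j) != lam i /\ conjc (lam j) != - lam i) ->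
  (forall i, lax_solution u (lam i) (phi i)) ->
  (forall x t, Mmat lam phi x t \in unitmx) ->
  (forall x t, denom lam phi x t != 0) ->
  forall x t, u0 u lam phi x t = uinf u lam phi x t.
Proof.
move=> _ _ _ _ Hlam Hlax HU _ x t.
have hF := hasdM_mul (hasdM_mul (hasdM_conj (hbM Hlax t x))
   (hasdM_inv (fun y => HU y t) (hM Hlam Hlax t x))) (haM Hlax t x).
rewrite /u0 (@hasd_pdx R (fun y s => (Defs.conjmx (phicomp phi 1 y s) *m invmx (Mmat lam phi y s) *m phicomp phi 0 y s) 0 0) x t _ (hF 0 0)).
rewrite MxfE /uinf /denom -cmxV /ad /bd.
exact: (final (u x t) (mulVmx (HU x t)) (mulmxV (HU x t)) (S1 phi Hlam t x) (S2 phi Hlam t x)).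
Qed.
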